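(* For every 3-periodic of the elliptic billiard, the product of the cosines of the three interior angles $\theta_1',\theta_2',\theta_3'$ of its outer triangle satisfies $$\prod_{i=1}^3\cos\theta_i'=\frac{JL}{4}-1,$$ where $J$ and $L$ are the (family-invariant) Joachimsthal constant and perimeter; in particular this product is the same for all 3-periodics.
   Context: The elliptic billiard is $\mathcal{E}: x^2/a^2+y^2/b^2=1$, $a>b>0$, $c=\sqrt{a^2-b^2}$. A 3-periodic is a triangle $P_1P_2P_3$ inscribed in $\mathcal{E}$ that is a closed billiard trajectory (at each vertex the normal to $\mathcal{E}$ bisects the angle between the two incident sides); all 3-periodics are tangent to a common confocal elliptic caustic. The outer triangle has as sides the tangent lines to $\mathcal{E}$ at $P_1,P_2,P_3$. The perimeter $L$ is the same for all 3-periodics. Joachimsthal's constant is $J=\frac12\nabla f(P_i)\cdot\hat v$, where $f(x,y)=x^2/a^2+y^2/b^2$, $\nabla f=2(x/a^2,y/b^2)$, and $\hat v$ is the unit direction of the trajectory at $P_i$ (outgoing, oriented so that $J>0$); it is the same at every vertex and for every 3-periodic. Explicitly, with $\delta=\sqrt{a^4-a^2b^2+b^4}$: $J=\sqrt{2\delta-a^2-b^2}/c^2$ and $L=2(\delta+a^2+b^2)J$. Moreover $\sum_{i=1}^3\cos\theta_i=JL-3$ for the interior angles $\theta_i$ of the 3-periodic. *)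

(* Defs.v *)
From Stdlib Require Import Reals.
Open Scope R_scope.

Definition pt : Type := (R * R)%type.

Definition vsub (P Q : pt) : pt := (fst P - fst Q, snd P - snd Q).
Definition vadd (P Q : pt) : pt := (fst P + fst Q, snd P + snd Q).
Definition dot (u v : pt) : R := fst u * fst v + snd u * snd v.
Definition cross (u v : pt) : R := fst u * snd v - snd u * fst v.
Definition vnorm (u : pt) : R := sqrt (dot u u).
Definition unitv (u : pt) : pt := (fst u / vnorm u, snd u / vnorm u).

Definition fE (a b : R) (P : pt) : R := fst P ^ 2 / a ^ 2 + snd P ^ 2 / b ^ 2.
Definition on_ellipse (a b : R) (P : pt) : Prop := fE a b P = 1.
Definition gradf (a b : R) (P : pt) : pt := (2 * fst P / a ^ 2, 2 * snd P / b ^ 2).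

(* At vertex P (with neighbours Pprev, Pnext), the normal to the ellipse
   (direction gradf P) bisects the angle between the two incident sides:
   the bisector direction (sum of the two unit side vectors) is parallel
   to the normal. *)
Definition normal_bisects (a b : R) (Pprev P Pnext : pt) : Prop :=
  cross (vadd (unitv (vsub Pprev P)) (unitv (vsub Pnext P))) (gradf a b P) = 0.

Definition is_3periodic (a b : R) (P1 P2 P3 : pt) : Prop :=
  on_ellipse a b P1 /\ on_ellipse a b P2 /\ on_ellipse a b P3 /\
  P1 <> P2 /\ P2 <> P3 /\ P3 <> P1 /\
  normal_bisects a b P3 P1 P2 /\
  normal_bisects a b P1 P2 P3 /\
  normal_bisects a b P2 P3 P1.

Definition on_tangent (a b : R) (P Q : pt) : Prop :=
  dot (vsub Q P) (gradf a b P) = 0.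

Definition angle_at (A B C : pt) : R :=
  acos (dot (vsub B A) (vsub C A) / (vnorm (vsub B A) * vnorm (vsub C A))).

(* family invariants (closed forms) *)
Definition deltaE (a b : R) : R := sqrt (a ^ 4 - a ^ 2 * b ^ 2 + b ^ 4).
Definition cE (a b : R) : R := sqrt (a ^ 2 - b ^ 2).
Definition Jconst (a b : R) : R :=
  sqrt (2 * deltaE a b - a ^ 2 - b ^ 2) / cE a b ^ 2.
Definition Lconst (a b : R) : R :=
  2 * (deltaE a b + a ^ 2 + b ^ 2) * Jconst a b.

(* Main.v *)
Require Import Defs.
From Stdlib Require Import Reals Lra Lia Psatz.
Open Scope R_scope.

Definition hh (X Y X' Y' : R) := X*X' + Y*Y' - 1.
Definition gg (u a b X Y X' Y' : R) :=
  X*X'*(1 - u*(a^2-b^2)) + Y*Y'*(1+u*(a^2-b^2)) + (u*(a^2+b^2) - 1).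
Definition nn (a b X Y X' Y' : R) := b^2*X*X' + a^2*Y*Y'.
Definition dV (X1 Y1 X2 Y2 X3 Y3 : R) := X1*(Y2-Y3) - X2*(Y1-Y3) + X3*(Y1-Y2).

Lemma id_detH X1 Y1 X2 Y2 X3 Y3 :
  let h11 := hh X1 Y1 X1 Y1 in let h22 := hh X2 Y2 X2 Y2 in let h33 := hh X3 Y3 X3 Y3 in
  let h12 := hh X1 Y1 X2 Y2 in let h13 := hh X1 Y1 X3 Y3 in let h23 := hh X2 Y2 X3 Y3 in
  h11*(h22*h33 - h23^2) - h12*(h12*h33 - h13*h23) + h13*(h12*h23 - h22*h13)
  = - (dV X1 Y1 X2 Y2 X3 Y3)^2.
Proof. unfold hh, dV; simpl; ring. Qed.

Lemma id_detG u a b X1 Y1 X2 Y2 X3 Y3 :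
  let g11 := gg u a b X1 Y1 X1 Y1 in let g22 := gg u a b X2 Y2 X2 Y2 in let g33 := gg u a b X3 Y3 X3 Y3 in
  let g12 := gg u a b X1 Y1 X2 Y2 in let g13 := gg u a b X1 Y1 X3 Y3 in let g23 := gg u a b X2 Y2 X3 Y3 in
  g11*(g22*g33 - g23^2) - g12*(g12*g33 - g13*g23) + g13*(g12*g23 - g22*g13)
  = (dV X1 Y1 X2 Y2 X3 Y3)^2 * ((1 - u*(a^2-b^2))*(1+u*(a^2-b^2))*(u*(a^2+b^2)-1)).
Proof. unfold gg, dV; simpl; ring. Qed.

Lemma id_adj u a b X1 Y1 X2 Y2 X3 Y3 :
  let g11 := gg u a b X1 Y1 X1 Y1 in let g22 := gg u a b X2 Y2 X2 Y2 in let g33 := gg u a b X3 Y3 X3 Y3 in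
  let g12 := gg u a b X1 Y1 X2 Y2 in let g13 := gg u a b X1 Y1 X3 Y3 in let g23 := gg u a b X2 Y2 X3 Y3 in
  let h11 := hh X1 Y1 X1 Y1 in let h22 := hh X2 Y2 X2 Y2 in let h33 := hh X3 Y3 X3 Y3 in
  let h12 := hh X1 Y1 X2 Y2 in let h13 := hh X1 Y1 X3 Y3 in let h23 := hh X2 Y2 X3 Y3 in
  (g22*g33 - g23^2)*h11 + (g11*g33 - g13^2)*h22 + (g11*g22 - g12^2)*h33
  + 2*(g13*g23 - g12*g33)*h12 + 2*(g12*g23 - g13*g22)*h13 + 2*(g12*g13 - g11*g23)*h23
  = (dV X1 Y1 X2 Y2 X3 Y3)^2 * ((a^2-b^2)^2*u^2 + 2*(a^2+b^2)*u - 3).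
Proof. unfold gg, hh, dV; simpl; ring. Qed.

Lemma id_nn u a b X Y X' Y' :
  2*u*nn a b X Y X' Y' = gg u a b X Y X' Y' + (u*(a^2+b^2)-1)*hh X Y X' Y'.
Proof. unfold gg, hh, nn; ring. Qed.


Lemma core u a b X1 Y1 X2 Y2 X3 Y3 :
  hh X1 Y1 X1 Y1 = 0 -> hh X2 Y2 X2 Y2 = 0 -> hh X3 Y3 X3 Y3 = 0 ->
  gg u a b X1 Y1 X2 Y2 = 0 -> gg u a b X1 Y1 X3 Y3 = 0 -> gg u a b X2 Y2 X3 Y3 = 0 ->
  hh X1 Y1 X2 Y2 <> 0 -> hh X1 Y1 X3 Y3 <> 0 -> hh X2 Y2 X3 Y3 <> 0 -> 0 < u ->
  dV X1 Y1 X2 Y2 X3 Y3 <> 0 /\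
  (a^2-b^2)^2*u^2 + 2*(a^2+b^2)*u - 3 = 0 /\
  - (nn a b X1 Y1 X2 Y2 * nn a b X2 Y2 X3 Y3 * nn a b X1 Y1 X3 Y3)
  = (u*(a^2+b^2)-1)/4 * (nn a b X1 Y1 X1 Y1 * nn a b X2 Y2 X2 Y2 * nn a b X3 Y3 X3 Y3).
Proof.
  intros h11 h22 h33 g12 g13 g23 n12 n13 n23 hu.
  pose proof (id_detH X1 Y1 X2 Y2 X3 Y3) as DH. cbv zeta in DH.
  pose proof (id_detG u a b X1 Y1 X2 Y2 X3 Y3) as DG. cbv zeta in DG.
  pose proof (id_adj u a b X1 Y1 X2 Y2 X3 Y3) as AD. cbv zeta in AD.
  rewrite h11, h22, h33 in DH. rewrite g12, g13, g23 in DG.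
  rewrite h11, h22, h33, g12, g13, g23 in AD.
  set (d := dV X1 Y1 X2 Y2 X3 Y3) in *.
  assert (Hd : d^2 <> 0).
  { intro E. assert (2 * hh X1 Y1 X2 Y2 * hh X1 Y1 X3 Y3 * hh X2 Y2 X3 Y3 = 0) by nra.
    repeat (apply Rmult_integral in H; destruct H as [H|H]); lra. }
  assert (HT : (a^2-b^2)^2*u^2 + 2*(a^2+b^2)*u - 3 = 0).
  { apply (Rmult_eq_reg_l (d^2)); [|exact Hd]. rewrite <- AD. ring. }
  split. { intro E; apply Hd; rewrite E; ring. }
  split. exact HT.
  pose proof (id_nn u a b X1 Y1 X2 Y2) as N12.
  pose proof (id_nn u a b X1 Y1 X3 Y3) as N13.
  pose proof (id_nn u a b X2 Y2 X3 Y3) as N23.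
  pose proof (id_nn u a b X1 Y1 X1 Y1) as N11.
  pose proof (id_nn u a b X2 Y2 X2 Y2) as N22.
  pose proof (id_nn u a b X3 Y3 X3 Y3) as N33.
  rewrite g12 in N12. rewrite g13 in N13. rewrite g23 in N23.
  rewrite h11 in N11. rewrite h22 in N22. rewrite h33 in N33.
  set (w := u*(a^2+b^2)-1) in *.
  apply (Rmult_eq_reg_l (8*u^3)); [| apply Rgt_not_eq; apply Rmult_lt_0_compat; [lra| apply pow_lt; lra]].
  transitivity (- ((2*u*nn a b X1 Y1 X2 Y2) * (2*u*nn a b X2 Y2 X3 Y3) * (2*u*nn a b X1 Y1 X3 Y3))). ring.
  rewrite N12, N13, N23.
  transitivity (w/4 * ((2*u*nn a b X1 Y1 X1 Y1) * (2*u*nn a b X2 Y2 X2 Y2) * (2*u*nn a b X3 Y3 X3 Y3))). 2: ring.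
  rewrite N11, N22, N33.
  assert (P1 : hh X1 Y1 X2 Y2 * hh X2 Y2 X3 Y3 * hh X1 Y1 X3 Y3 = - d^2/2) by lra.
  assert (E1 : (1 - u*(a^2-b^2)) * (1 + u*(a^2-b^2)) = 2*w) by (unfold w; lra).
  assert (P2 : gg u a b X1 Y1 X1 Y1 * gg u a b X2 Y2 X2 Y2 * gg u a b X3 Y3 X3 Y3 = d^2*(2*w)*w).
  { rewrite <- E1. lra. }
  transitivity (- w^3 * (hh X1 Y1 X2 Y2 * hh X2 Y2 X3 Y3 * hh X1 Y1 X3 Y3)). ring.
  transitivity (w/4 * (gg u a b X1 Y1 X1 Y1 * gg u a b X2 Y2 X2 Y2 * gg u a b X3 Y3 X3 Y3)). 2: ring.
  rewrite P1, P2. field.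
Qed.


Lemma vertex dx dy ex ey nx ny :
  0 < dx*dx+dy*dy -> 0 < ex*ex+ey*ey ->
  cross (vadd (unitv (dx,dy)) (unitv (ex,ey))) (nx,ny) = 0 ->
  (nx*dx+ny*dy)^2*(ex*ex+ey*ey) = (nx*ex+ny*ey)^2*(dx*dx+dy*dy).
Proof.
  intros Hd He H.
  unfold cross, vadd, unitv, vnorm, dot in H; simpl in H.
  set (ld := sqrt (dx*dx+dy*dy)) in *. set (le := sqrt (ex*ex+ey*ey)) in *.
  assert (Ld : 0 < ld) by (apply sqrt_lt_R0; lra).
  assert (Le : 0 < le) by (apply sqrt_lt_R0; lra).
  assert (Ld2 : ld*ld = dx*dx+dy*dy) by (apply sqrt_sqrt; lra).
  assert (Le2 : le*le = ex*ex+ey*ey) by (apply sqrt_sqrt; lra).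
  assert (H1 : le*(dx*ny - dy*nx) = - ld*(ex*ny - ey*nx)).
  { assert (E : ld*le*((dx/ld + ex/le)*ny - (dy/ld+ey/le)*nx)
              = le*(dx*ny-dy*nx) + ld*(ex*ny-ey*nx)) by (field; lra).
    rewrite H, Rmult_0_r in E. lra. }
  assert (H2 : (le*le)*(dx*ny - dy*nx)^2 = (ld*ld)*(ex*ny - ey*nx)^2).
  { replace ((le*le)*(dx*ny - dy*nx)^2) with ((le*(dx*ny - dy*nx))^2) by ring.
    rewrite H1. ring. }
  rewrite Ld2, Le2 in H2. lra.
Qed.


Lemma perp_param vx vy nx ny : 0 < nx*nx+ny*ny -> vx*nx+vy*ny = 0 ->
  exists r, vx = - r*ny /\ vy = r*nx.
Proof.
  intros Hn Ho. exists ((nx*vy - ny*vx)/(nx*nx+ny*ny)).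
  assert (K1 : vx*(nx*nx+ny*ny) = -(nx*vy-ny*vx)*ny).
  { replace (vx*(nx*nx+ny*ny)) with (nx*(vx*nx+vy*ny) - (nx*vy-ny*vx)*ny) by ring.
    rewrite Ho; ring. }
  assert (K2 : vy*(nx*nx+ny*ny) = (nx*vy-ny*vx)*nx).
  { replace (vy*(nx*nx+ny*ny)) with (ny*(vx*nx+vy*ny) + (nx*vy-ny*vx)*nx) by ring.
    rewrite Ho; ring. }
  split.
  - apply (Rmult_eq_reg_r (nx*nx+ny*ny)); [|lra]. rewrite K1. field. lra.
  - apply (Rmult_eq_reg_r (nx*nx+ny*ny)); [|lra]. rewrite K2. field. lra.
Qed.

Lemma ratio v1x v1y v2x v2y v3x v3y n1x n1y n2x n2y n3x n3y :
  0 < n1x*n1x+n1y*n1y -> 0 < n2x*n2x+n2y*n2y -> 0 < n3x*n3x+n3y*n3y ->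
  v1x*n1x+v1y*n1y = 0 -> v2x*n2x+v2y*n2y = 0 -> v3x*n3x+v3y*n3y = 0 ->
  0 < v1x*v1x+v1y*v1y -> 0 < v2x*v2x+v2y*v2y -> 0 < v3x*v3x+v3y*v3y ->
  (v3x*(-v2x)+v3y*(-v2y))*(v1x*(-v3x)+v1y*(-v3y))*(v2x*(-v1x)+v2y*(-v1y))
   / ((v1x*v1x+v1y*v1y)*(v2x*v2x+v2y*v2y)*(v3x*v3x+v3y*v3y))
  = - ((n1x*n2x+n1y*n2y)*(n2x*n3x+n2y*n3y)*(n1x*n3x+n1y*n3y))
     / ((n1x*n1x+n1y*n1y)*(n2x*n2x+n2y*n2y)*(n3x*n3x+n3y*n3y)).
Proof.
  intros N1 N2 N3 O1 O2 O3 V1 V2 V3.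
  destruct (perp_param _ _ _ _ N1 O1) as [r1 [E1 F1]].
  destruct (perp_param _ _ _ _ N2 O2) as [r2 [E2 F2]].
  destruct (perp_param _ _ _ _ N3 O3) as [r3 [E3 F3]].
  subst v1x v1y v2x v2y v3x v3y.
  assert (r1 <> 0) by (intro; subst; nra).
  assert (r2 <> 0) by (intro; subst; nra).
  assert (r3 <> 0) by (intro; subst; nra).
  field. repeat split; try lra; nra.
Qed.

Lemma CSineq (u v : pt) : (dot u v)^2 <= dot u u * dot v v.
Proof.
  destruct u as [ux uy], v as [vx vy]; unfold dot; simpl.
  assert (0 <= (ux*vy - uy*vx)^2) by apply pow2_ge_0. nra.
Qed.

Lemma cos_angle A B C :
  0 < dot (vsub B A) (vsub B A) -> 0 < dot (vsub C A) (vsub C A) ->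
  cos (angle_at A B C) = dot (vsub B A) (vsub C A) /
     (sqrt (dot (vsub B A) (vsub B A)) * sqrt (dot (vsub C A) (vsub C A))).
Proof.
  intros HB HC. unfold angle_at, vnorm. apply cos_acos.
  set (u := vsub B A) in *. set (v := vsub C A) in *.
  rewrite <- sqrt_mult by lra.
  assert (Hp : 0 < sqrt (dot u u * dot v v)) by (apply sqrt_lt_R0; nra).
  assert (Hs : sqrt (dot u u * dot v v) * sqrt (dot u u * dot v v) = dot u u * dot v v)
    by (apply sqrt_sqrt; nra).
  assert (CS : (dot u v)^2 <= dot u u * dot v v).
  { apply CSineq. }
  assert (Hb : - sqrt (dot u u * dot v v) <= dot u v <= sqrt (dot u u * dot v v)) by nra.
  split.
  - apply (Rmult_le_reg_l (sqrt (dot u u * dot v v))); [lra|].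
    field_simplify; lra.
  - apply (Rmult_le_reg_l (sqrt (dot u u * dot v v))); [lra|].
    field_simplify; lra.
Qed.

Lemma angles q1x q1y q2x q2y q3x q3y n1x n1y n2x n2y n3x n3y :
  0 < n1x*n1x+n1y*n1y -> 0 < n2x*n2x+n2y*n2y -> 0 < n3x*n3x+n3y*n3y ->
  (q3x-q2x)*n1x+(q3y-q2y)*n1y = 0 -> (q1x-q3x)*n2x+(q1y-q3y)*n2y = 0 ->
  (q2x-q1x)*n3x+(q2y-q1y)*n3y = 0 ->
  0 < (q3x-q2x)*(q3x-q2x)+(q3y-q2y)*(q3y-q2y) ->
  0 < (q1x-q3x)*(q1x-q3x)+(q1y-q3y)*(q1y-q3y) ->
  0 < (q2x-q1x)*(q2x-q1x)+(q2y-q1y)*(q2y-q1y) ->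
  cos (angle_at (q1x,q1y) (q2x,q2y) (q3x,q3y)) * cos (angle_at (q2x,q2y) (q3x,q3y) (q1x,q1y))
  * cos (angle_at (q3x,q3y) (q1x,q1y) (q2x,q2y))
  = - ((n1x*n2x+n1y*n2y)*(n2x*n3x+n2y*n3y)*(n1x*n3x+n1y*n3y))
     / ((n1x*n1x+n1y*n1y)*(n2x*n2x+n2y*n2y)*(n3x*n3x+n3y*n3y)).
Proof.
  intros N1 N2 N3 O1 O2 O3 V1 V2 V3.
  rewrite <- (ratio (q3x-q2x) (q3y-q2y) (q1x-q3x) (q1y-q3y) (q2x-q1x) (q2y-q1y)
     n1x n1y n2x n2y n3x n3y N1 N2 N3 O1 O2 O3 V1 V2 V3).
  set (d1 := (q3x-q2x)*(q3x-q2x)+(q3y-q2y)*(q3y-q2y)) in *.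
  set (d2 := (q1x-q3x)*(q1x-q3x)+(q1y-q3y)*(q1y-q3y)) in *.
  set (d3 := (q2x-q1x)*(q2x-q1x)+(q2y-q1y)*(q2y-q1y)) in *.
  assert (C1 : cos (angle_at (q1x,q1y) (q2x,q2y) (q3x,q3y)) =
     ((q2x-q1x)*(q3x-q1x)+(q2y-q1y)*(q3y-q1y)) / (sqrt d3 * sqrt d2)).
  { rewrite cos_angle; unfold dot, vsub; simpl.
    - unfold d2, d3. f_equal. f_equal. f_equal. ring.
    - unfold d3 in V3. lra.
    - unfold d2 in V2. nra. }
  assert (C2 : cos (angle_at (q2x,q2y) (q3x,q3y) (q1x,q1y)) =
     ((q3x-q2x)*(q1x-q2x)+(q3y-q2y)*(q1y-q2y)) / (sqrt d1 * sqrt d3)).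
  { rewrite cos_angle; unfold dot, vsub; simpl.
    - unfold d1, d3. f_equal. f_equal. f_equal. ring.
    - unfold d1 in V1. lra.
    - unfold d3 in V3. nra. }
  assert (C3 : cos (angle_at (q3x,q3y) (q1x,q1y) (q2x,q2y)) =
     ((q1x-q3x)*(q2x-q3x)+(q1y-q3y)*(q2y-q3y)) / (sqrt d2 * sqrt d1)).
  { rewrite cos_angle; unfold dot, vsub; simpl.
    - unfold d1, d2. f_equal. f_equal. f_equal. ring.
    - unfold d2 in V2. lra.
    - unfold d1 in V1. nra. }
  rewrite C1, C2, C3.
  assert (S1 : sqrt d1 * sqrt d1 = d1) by (apply sqrt_sqrt; lra).
  assert (S2 : sqrt d2 * sqrt d2 = d2) by (apply sqrt_sqrt; lra).
  assert (S3 : sqrt d3 * sqrt d3 = d3) by (apply sqrt_sqrt; lra).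
  assert (P1 : 0 < sqrt d1) by (apply sqrt_lt_R0; lra).
  assert (P2 : 0 < sqrt d2) by (apply sqrt_lt_R0; lra).
  assert (P3 : 0 < sqrt d3) by (apply sqrt_lt_R0; lra).
  set (s1 := sqrt d1) in *. set (s2 := sqrt d2) in *. set (s3 := sqrt d3) in *.
  transitivity (((q2x-q1x)*(q3x-q1x)+(q2y-q1y)*(q3y-q1y)) *
     ((q3x-q2x)*(q1x-q2x)+(q3y-q2y)*(q1y-q2y)) * ((q1x-q3x)*(q2x-q3x)+(q1y-q3y)*(q2y-q3y))
     / ((s1*s1)*(s2*s2)*(s3*s3))).
  { field. repeat split; lra. }
  rewrite S1, S2, S3. unfold d1, d2, d3. f_equal. ring.
Qed.


Lemma finalJ a b u : 0 < b -> b < a -> 0 < u ->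
  (a^2-b^2)^2*u^2 + 2*(a^2+b^2)*u - 3 = 0 ->
  (u*(a^2+b^2)-1)/4 = Jconst a b * Lconst a b / 4 - 1.
Proof.
  intros hb hab hu T.
  unfold Lconst, Jconst, cE, deltaE.
  set (d := sqrt (a^4 - a^2*b^2 + b^4)).
  assert (Hq : 0 <= a^4 - a^2*b^2 + b^4) by nra.
  assert (Dd : d*d = a^4 - a^2*b^2 + b^4) by (apply sqrt_sqrt; lra).
  assert (D0 : 0 <= d) by apply sqrt_pos.
  assert (Hc : 0 < a^2 - b^2) by nra.
  assert (Cc : sqrt (a^2-b^2) ^ 2 = a^2-b^2) by (rewrite <- Rsqr_pow2; apply Rsqr_sqrt; lra).
  rewrite Cc.
  set (c := a^2-b^2) in *. set (A := a^2+b^2) in *.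
  assert (Kd : c^2*u + A = 2*d).
  { assert (E : (c^2*u + A)^2 = (2*d)^2).
    { replace ((2*d)^2) with (4*(d*d)) by ring. rewrite Dd.
      replace ((c^2*u+A)^2) with (c^2*(c^2*u^2+2*A*u-3) + 3*c^2 + A^2) by ring.
      rewrite T. unfold c, A. ring. }
    assert (0 < c^2*u + A) by (unfold A; nra).
    assert (Z : (c^2*u + A - 2*d)*(c^2*u + A + 2*d) = 0) by (replace ((c^2*u + A - 2*d)*(c^2*u + A + 2*d)) with ((c^2*u+A)^2 - (2*d)^2) by ring; rewrite E; ring).
    apply Rmult_integral in Z. destruct Z; lra. }
  assert (Cu : 0 <= c^2*u) by (apply Rmult_le_pos; [apply pow2_ge_0|lra]).
  assert (Hs : 0 <= 2*d - a^2 - b^2) by (unfold A in Kd; lra).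
  assert (SS : sqrt (2*d - a^2 - b^2) * sqrt (2*d - a^2 - b^2) = 2*d - a^2 - b^2)
    by (apply sqrt_sqrt; lra).
  assert (c <> 0) by lra.
  set (s := sqrt (2 * d - a ^ 2 - b ^ 2)) in *.
  transitivity (2*(d + a^2 + b^2)*(s*s)/(c*c)/4 - 1).
  2: { field. auto. }
  rewrite SS.
  assert (K1 : 2*d - a^2 - b^2 = c^2*u) by (unfold A in Kd; lra).
  assert (K2 : d + a^2 + b^2 = (c^2*u + A)/2 + A) by (unfold A in Kd |- *; lra).
  rewrite K1, K2.
  apply (Rmult_eq_reg_l 4); [|lra].
  replace (4 * (2 * ((c ^ 2 * u + A) / 2 + A) * (c ^ 2 * u) / (c * c) / 4 - 1))
    with ((c^2*u^2 + 2*A*u - 3) + A*u - 1) by (field; auto).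
  rewrite T. field.
Qed.


Definition DD a b X Y X' Y' := (a^2+b^2) - (a^2-b^2)*(X*X' - Y*Y').

Lemma ell2 a b Xi Yi Xj Yj : Xi*Xi+Yi*Yi = 1 -> Xj*Xj+Yj*Yj = 1 ->
  (a*Xj - a*Xi)*(a*Xj - a*Xi) + (b*Yj - b*Yi)*(b*Yj - b*Yi)
  = - hh Xi Yi Xj Yj * DD a b Xi Yi Xj Yj.
Proof.
  intros Ci Cj.
  assert (Ui : Xi*Xi+Yi*Yi-1 = 0) by lra. assert (Uj : Xj*Xj+Yj*Yj-1 = 0) by lra.
  assert (E : - hh Xi Yi Xj Yj * DD a b Xi Yi Xj Yj
     - ((a*Xj - a*Xi)*(a*Xj - a*Xi) + (b*Yj - b*Yi)*(b*Yj - b*Yi))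
     = a^2*(-(Xi*Xi+Yi*Yi-1)*(Yj*Yj) - (Xj*Xj+Yj*Yj-1)*(Yi*Yi) + (Xi*Xi+Yi*Yi-1)*(Xj*Xj+Yj*Yj-1))
     + b^2*(-(Xi*Xi+Yi*Yi-1)*(Xj*Xj) - (Xj*Xj+Yj*Yj-1)*(Xi*Xi) + (Xi*Xi+Yi*Yi-1)*(Xj*Xj+Yj*Yj-1)))
    by (unfold hh, DD; ring).
  rewrite Ui, Uj in E. lra.
Qed.

Lemma ndot a b Xi Yi Xj Yj : 0 < a -> 0 < b -> Xi*Xi+Yi*Yi = 1 ->
  (2*(a*Xi)/a^2)*(a*Xj - a*Xi) + (2*(b*Yi)/b^2)*(b*Yj - b*Yi) = 2*hh Xi Yi Xj Yj.
Proof.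
  intros ha hb Ci. unfold hh.
  replace ((2*(a*Xi)/a^2)*(a*Xj - a*Xi) + (2*(b*Yi)/b^2)*(b*Yj - b*Yi))
    with (2*(Xi*Xj + Yi*Yj - (Xi*Xi+Yi*Yi))) by (field; lra).
  rewrite Ci. ring.
Qed.

Lemma hneg a b Xi Yi Xj Yj : Xi*Xi+Yi*Yi = 1 -> Xj*Xj+Yj*Yj = 1 ->
  (a*Xi, b*Yi) <> (a*Xj, b*Yj) -> hh Xi Yi Xj Yj < 0.
Proof.
  intros Ci Cj N. unfold hh.
  destruct (Rlt_or_le (Xi*Xj+Yi*Yj-1) 0) as [H|H]; [exact H|].
  exfalso. apply N.
  assert (S : (Xi-Xj)^2 + (Yi-Yj)^2 <= 0).
  { replace ((Xi-Xj)^2 + (Yi-Yj)^2) with ((Xi*Xi+Yi*Yi) + (Xj*Xj+Yj*Yj) - 2*(Xi*Xj+Yi*Yj)) by ring.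
    lra. }
  assert (0 <= (Xi-Xj)^2) by apply pow2_ge_0. assert (0 <= (Yi-Yj)^2) by apply pow2_ge_0.
  assert (Z1 : (Xi - Xj)*(Xi-Xj) = 0) by nra.
  assert (Z2 : (Yi - Yj)*(Yi-Yj) = 0) by nra.
  apply Rmult_integral in Z1. apply Rmult_integral in Z2.
  assert (Xi - Xj = 0) by (destruct Z1; lra).
  assert (Yi - Yj = 0) by (destruct Z2; lra).
  replace Xj with Xi by lra. replace Yj with Yi by lra. reflexivity.
Qed.

Lemma Dpos a b Xi Yi Xj Yj : 0 < b -> b < a -> Xi*Xi+Yi*Yi = 1 -> Xj*Xj+Yj*Yj = 1 ->
  0 < DD a b Xi Yi Xj Yj.
Proof.
  intros hb hab Ci Cj. unfold DD.
  assert (CS : (Xi*Xj - Yi*Yj)^2 <= 1).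
  { replace 1 with ((Xi*Xi+Yi*Yi)*(Xj*Xj+Yj*Yj)) by (rewrite Ci, Cj; ring).
    assert (0 <= (Xi*Yj + Yi*Xj)^2) by apply pow2_ge_0. nra. }
  assert (Xi*Xj - Yi*Yj <= 1) by nra.
  assert (0 < a^2 - b^2) by nra.
  assert (0 < b^2) by nra. nra.
Qed.

Lemma gg_eq u a b X Y X' Y' : gg u a b X Y X' Y' = u * DD a b X Y X' Y' + hh X Y X' Y'.
Proof. unfold gg, DD, hh; ring. Qed.

Lemma hh_sym X Y X' Y' : hh X Y X' Y' = hh X' Y' X Y.
Proof. unfold hh; ring. Qed.
Lemma DD_sym a b X Y X' Y' : DD a b X Y X' Y' = DD a b X' Y' X Y.
Proof. unfold DD; ring. Qed.

Lemma tangent_eq a b X Y qx qy : 0 < a -> 0 < b -> X*X+Y*Y = 1 ->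
  on_tangent a b (a*X, b*Y) (qx,qy) -> (qx/a)*X + (qy/b)*Y = 1.
Proof.
  intros ha hb C H. unfold on_tangent, dot, vsub, gradf in H; cbn [fst snd] in H.
  assert (E : (qx - a*X) * (2*(a*X)/a^2) + (qy - b*Y) * (2*(b*Y)/b^2)
    = 2*((qx/a)*X + (qy/b)*Y - (X*X+Y*Y))) by (field; lra).
  rewrite C in E. lra.
Qed.

Lemma dV_zero s t X1 Y1 X2 Y2 X3 Y3 :
  s*X1 + t*Y1 = 1 -> s*X2 + t*Y2 = 1 -> s*X3 + t*Y3 = 1 -> dV X1 Y1 X2 Y2 X3 Y3 = 0.
Proof.
  intros H1 H2 H3.
  assert (E : dV X1 Y1 X2 Y2 X3 Y3 = (X2*Y3 - X3*Y2)*(1 - (s*X1+t*Y1))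
     - (X1*Y3 - X3*Y1)*(1 - (s*X2+t*Y2)) + (X1*Y2 - X2*Y1)*(1-(s*X3+t*Y3)))
    by (unfold dV; ring).
  rewrite H1, H2, H3 in E. lra.
Qed.

Lemma nn_pos a b X Y : 0 < b -> b < a -> X*X+Y*Y = 1 -> 0 < nn a b X Y X Y.
Proof.
  intros hb hab C. unfold nn.
  assert (0 <= (a^2-b^2)*(Y*Y)) by (apply Rmult_le_pos; nra).
  replace (b^2*X*X + a^2*Y*Y) with (b^2*(X*X+Y*Y) + (a^2-b^2)*(Y*Y)) by ring.
  rewrite C. nra.
Qed.


Lemma nn_grad a b Xi Yi Xj Yj : 0 < a -> 0 < b ->
  (2*(a*Xi)/a^2)*(2*(a*Xj)/a^2) + (2*(b*Yi)/b^2)*(2*(b*Yj)/b^2)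
  = 4 * nn a b Xi Yi Xj Yj / (a^2*b^2).
Proof. intros. unfold nn. field. lra. Qed.

Lemma sq0 x y : x*x + y*y <= 0 -> x = 0 /\ y = 0.
Proof.
  intros H.
  assert (Z1 : x*x = 0) by nra. assert (Z2 : y*y = 0) by nra.
  apply Rmult_integral in Z1. apply Rmult_integral in Z2. split; [destruct Z1|destruct Z2]; lra.
Qed.

Lemma circ a b X Y : 0 < a -> 0 < b -> on_ellipse a b (a*X, b*Y) -> X*X+Y*Y = 1.
Proof.
  intros ha hb H. unfold on_ellipse, fE in H; cbn [fst snd] in H.
  rewrite <- H. field. lra.
Qed.

Lemma orth a b X Y px py qx qy : 0 < a -> 0 < b ->
  (px/a)*X + (py/b)*Y = 1 -> (qx/a)*X + (qy/b)*Y = 1 ->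
  (qx-px)*(2*(a*X)/a^2) + (qy-py)*(2*(b*Y)/b^2) = 0.
Proof.
  intros ha hb H1 H2.
  assert (E : (qx-px)*(2*(a*X)/a^2) + (qy-py)*(2*(b*Y)/b^2)
     = 2*(((qx/a)*X + (qy/b)*Y) - ((px/a)*X + (py/b)*Y))) by (field; lra).
  rewrite E, H1, H2. ring.
Qed.

Theorem mainTheorem8 (a b : R) (P1 P2 P3 Q1 Q2 Q3 : pt) :
  0 < b -> b < a ->
  is_3periodic a b P1 P2 P3 ->
  on_tangent a b P2 Q1 -> on_tangent a b P3 Q1 ->
  on_tangent a b P3 Q2 -> on_tangent a b P1 Q2 ->
  on_tangent a b P1 Q3 -> on_tangent a b P2 Q3 ->
  cos (angle_at Q1 Q2 Q3) * cos (angle_at Q2 Q3 Q1) * cos (angle_at Q3 Q1 Q2)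
  = Jconst a b * Lconst a b / 4 - 1.
Proof.
  intros hb hab Hper T21 T31 T32 T12 T13 T23.
  destruct Hper as (E1 & E2 & E3 & N12 & N23 & N31 & B1 & B2 & B3).
  assert (ha : 0 < a) by lra.
  destruct P1 as [x1 y1], P2 as [x2 y2], P3 as [x3 y3].
  destruct Q1 as [q1x q1y], Q2 as [q2x q2y], Q3 as [q3x q3y].
  assert (exists X, x1 = a*X) as [X1 ->] by (exists (x1/a); field; lra).
  assert (exists X, x2 = a*X) as [X2 ->] by (exists (x2/a); field; lra).
  assert (exists X, x3 = a*X) as [X3 ->] by (exists (x3/a); field; lra).
  assert (exists Y, y1 = b*Y) as [Y1 ->] by (exists (y1/b); field; lra).
  assert (exists Y, y2 = b*Y) as [Y2 ->] by (exists (y2/b); field; lra).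
  assert (exists Y, y3 = b*Y) as [Y3 ->] by (exists (y3/b); field; lra).
  apply circ in E1; try lra. apply circ in E2; try lra. apply circ in E3; try lra.
  pose proof (hneg a b X1 Y1 X2 Y2 E1 E2 N12) as h12.
  pose proof (hneg a b X2 Y2 X3 Y3 E2 E3 N23) as h23.
  pose proof (hneg a b X3 Y3 X1 Y1 E3 E1 N31) as h13. rewrite hh_sym in h13.
  pose proof (Dpos a b X1 Y1 X2 Y2 hb hab E1 E2) as D12.
  pose proof (Dpos a b X1 Y1 X3 Y3 hb hab E1 E3) as D13.
  pose proof (Dpos a b X2 Y2 X3 Y3 hb hab E2 E3) as D23.
  assert (L13 := ell2 a b X1 Y1 X3 Y3 E1 E3).
  assert (L12 := ell2 a b X1 Y1 X2 Y2 E1 E2).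
  assert (L23 := ell2 a b X2 Y2 X3 Y3 E2 E3).
  assert (L21 := ell2 a b X2 Y2 X1 Y1 E2 E1).
  rewrite hh_sym, DD_sym in L21.
  assert (V1 := vertex (a*X3-a*X1) (b*Y3-b*Y1) (a*X2-a*X1) (b*Y2-b*Y1)
                  (2*(a*X1)/a^2) (2*(b*Y1)/b^2) ltac:(nra) ltac:(nra) B1).
  rewrite (ndot a b X1 Y1 X3 Y3 ha hb E1), (ndot a b X1 Y1 X2 Y2 ha hb E1), L13, L12 in V1.
  assert (V2 := vertex (a*X1-a*X2) (b*Y1-b*Y2) (a*X3-a*X2) (b*Y3-b*Y2)
                  (2*(a*X2)/a^2) (2*(b*Y2)/b^2) ltac:(nra) ltac:(nra) B2).
  rewrite (ndot a b X2 Y2 X1 Y1 ha hb E2), (ndot a b X2 Y2 X3 Y3 ha hb E2), L21, L23 in V2.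
  rewrite (hh_sym X2 Y2 X1 Y1) in V2.
  set (h12v := hh X1 Y1 X2 Y2) in *. set (h13v := hh X1 Y1 X3 Y3) in *.
  set (h23v := hh X2 Y2 X3 Y3) in *.
  set (d12 := DD a b X1 Y1 X2 Y2) in *. set (d13 := DD a b X1 Y1 X3 Y3) in *.
  set (d23 := DD a b X2 Y2 X3 Y3) in *.
  assert (R1 : h13v*d12 = h12v*d13).
  { assert (Z : (4*h12v*h13v)*(h12v*d13 - h13v*d12) = 0) by (rewrite Rmult_minus_distr_l; lra).
    apply Rmult_integral in Z. destruct Z as [Z|Z]; [|lra].
    exfalso. nra. }
  assert (R2 : h23v*d12 = h12v*d23).
  { assert (Z : (4*h12v*h23v)*(h12v*d23 - h23v*d12) = 0) by (rewrite Rmult_minus_distr_l; lra).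
    apply Rmult_integral in Z. destruct Z as [Z|Z]; [|lra].
    exfalso. nra. }
  set (u := - h12v / d12).
  assert (hu : 0 < u).
  { unfold u, Rdiv. apply Rmult_lt_0_compat; [lra|]. apply Rinv_0_lt_compat; lra. }
  assert (G12 : gg u a b X1 Y1 X2 Y2 = 0).
  { rewrite gg_eq. fold d12 h12v. unfold u. field. lra. }
  assert (G13 : gg u a b X1 Y1 X3 Y3 = 0).
  { rewrite gg_eq. fold d13 h13v. unfold u.
    apply (Rmult_eq_reg_l d12); [|lra]. field_simplify; [|lra]. lra. }
  assert (G23 : gg u a b X2 Y2 X3 Y3 = 0).
  { rewrite gg_eq. fold d23 h23v. unfold u.
    apply (Rmult_eq_reg_l d12); [|lra]. field_simplify; [|lra]. lra. }
  assert (H11 : hh X1 Y1 X1 Y1 = 0) by (unfold hh; lra).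
  assert (H22 : hh X2 Y2 X2 Y2 = 0) by (unfold hh; lra).
  assert (H33 : hh X3 Y3 X3 Y3 = 0) by (unfold hh; lra).
  assert (n12 : h12v <> 0) by lra.
  assert (n13 : h13v <> 0) by lra.
  assert (n23 : h23v <> 0) by lra.
  destruct (core u a b X1 Y1 X2 Y2 X3 Y3 H11 H22 H33 G12 G13 G23
     n12 n13 n23 hu) as (DV & TT & PR).
  clear V1 V2 L12 L13 L21 L23 R1 R2.
  apply tangent_eq in T21; try lra. apply tangent_eq in T31; try lra.
  apply tangent_eq in T32; try lra. apply tangent_eq in T12; try lra.
  apply tangent_eq in T13; try lra. apply tangent_eq in T23; try lra.
  assert (Nz : forall X Y, X*X+Y*Y = 1 ->
     0 < (2*(a*X)/a^2)*(2*(a*X)/a^2) + (2*(b*Y)/b^2)*(2*(b*Y)/b^2)).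
  { intros X Y C. rewrite nn_grad by lra.
    pose proof (nn_pos a b X Y hb hab C).
    apply Rmult_lt_0_compat; [lra|]. apply Rinv_0_lt_compat. apply Rmult_lt_0_compat; apply pow_lt; lra. }
  assert (V1 : 0 < (q3x-q2x)*(q3x-q2x)+(q3y-q2y)*(q3y-q2y)).
  { destruct (Rlt_or_le 0 ((q3x-q2x)*(q3x-q2x)+(q3y-q2y)*(q3y-q2y))) as [P|P]; [exact P|].
    apply sq0 in P. destruct P as [P P']. exfalso. apply DV.
    apply (dV_zero (q2x/a) (q2y/b)); try lra.
    replace q2x with q3x by lra. replace q2y with q3y by lra. lra. }
  assert (V2 : 0 < (q1x-q3x)*(q1x-q3x)+(q1y-q3y)*(q1y-q3y)).
  { destruct (Rlt_or_le 0 ((q1x-q3x)*(q1x-q3x)+(q1y-q3y)*(q1y-q3y))) as [P|P]; [exact P|].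
    apply sq0 in P. destruct P as [P P']. exfalso. apply DV.
    apply (dV_zero (q3x/a) (q3y/b)); try lra.
    replace q3x with q1x by lra. replace q3y with q1y by lra. lra. }
  assert (V3 : 0 < (q2x-q1x)*(q2x-q1x)+(q2y-q1y)*(q2y-q1y)).
  { destruct (Rlt_or_le 0 ((q2x-q1x)*(q2x-q1x)+(q2y-q1y)*(q2y-q1y))) as [P|P]; [exact P|].
    apply sq0 in P. destruct P as [P P']. exfalso. apply DV.
    apply (dV_zero (q1x/a) (q1y/b)); try lra.
    replace q1x with q2x by lra. replace q1y with q2y by lra. lra. }
  rewrite (angles q1x q1y q2x q2y q3x q3y
      (2*(a*X1)/a^2) (2*(b*Y1)/b^2) (2*(a*X2)/a^2) (2*(b*Y2)/b^2) (2*(a*X3)/a^2) (2*(b*Y3)/b^2)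
      (Nz _ _ E1) (Nz _ _ E2) (Nz _ _ E3)
      (orth a b X1 Y1 _ _ _ _ ha hb T12 T13)
      (orth a b X2 Y2 _ _ _ _ ha hb T23 T21)
      (orth a b X3 Y3 _ _ _ _ ha hb T31 T32) V1 V2 V3).
  rewrite !nn_grad by lra.
  pose proof (nn_pos a b X1 Y1 hb hab E1). pose proof (nn_pos a b X2 Y2 hb hab E2).
  pose proof (nn_pos a b X3 Y3 hb hab E3).
  rewrite <- (finalJ a b u hb hab hu TT).
  transitivity (- (nn a b X1 Y1 X2 Y2 * nn a b X2 Y2 X3 Y3 * nn a b X1 Y1 X3 Y3) /
     (nn a b X1 Y1 X1 Y1 * nn a b X2 Y2 X2 Y2 * nn a b X3 Y3 X3 Y3)).
  { field. repeat split; try lra; nra. }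
  rewrite PR. field. repeat split; lra.
Qed.
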